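(* Let $n=2m+1$ be odd with $n\ge5$, and work in the polynomial ring $\mathbb Z_2[R,V_1,\dots,V_{n-1}]$ (no relations imposed). Let $D_n=\binom{n-1}{m+1}=\binom{n-1}{m-1}$, and enumerate the $(m+1)$-element subsets of $\{1,\dots,n-1\}$ as $L_1,\dots,L_{D_n}$. For each $i$ set $$p_i=\sum_{S\subset L_i,\ |S|=m-1}R\prod_{j\in S}V_j,\qquad f_i=\sum_{S\subset L_i,\ |S|\le m-2}R^{|L_i|-|S|-1}\prod_{j\in S}V_j$$ (the second sum including $S=\emptyset$). Let $$X_{m+1}=\Big\{\xi=(\xi_1,\dots,\xi_{D_n})\in(\mathbb Z_2)^{D_n}:\ \sum_{i=1}^{D_n}\xi_ip_i=0\Big\}.$$ Then (i) $\dim_{\mathbb Z_2}X_{m+1}=\beta_n$, where $\beta_n=D_n-\alpha_n$ and $\alpha_n=\sum_{i=0}^{m-1}2^{m-1-i}\binom{2i}{i}$; and (ii) for any basis $\Omega_{m+1}$ of $X_{m+1}$, the polynomials $F_\xi=\sum_{i=1}^{D_n}\xi_if_i$, $\xi\in\Omega_{m+1}$, are linearly independent over $\mathbb Z_2$.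
   Context: $\mathbb Z_2=\mathbb Z/2\mathbb Z$. Note $p_i+f_i=\sum_{S\subset L_i,\,|S|\le m-1}R^{|L_i-S|-1}\prod_{j\in S}V_j$. *)

(* Defs.v *)
From HB Require Import structures.
From Stdlib Require Import ClassicalEpsilon.
From mathcomp Require Import all_boot all_order all_algebra.
Set Implicit Arguments. Unset Strict Implicit. Unset Printing Implicit Defensive.
Import GRing.Theory.
Local Open Scope ring_scope.

(* Variable V_j (1 <= j <= n-1) is indexed by j-1 : 'I_(n.-1).
   A monomial R^a * prod_j V_j^(e_j) is the pair (a, e).
   A polynomial is represented by its coefficient function
   (only finitely supported ones occur below); two polynomials are equal
   iff all their coefficients agree. *)
Definition mono (n : nat) := (nat * {ffun 'I_n.-1 -> nat})%type.
Definition zpoly (n : nat) := mono n -> 'F_2.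

Definition monom n (a : nat) (S : {set 'I_n.-1}) : mono n :=
  (a, [ffun j => nat_of_bool (j \in S)]).

Definition mpoly n (a : nat) (S : {set 'I_n.-1}) : zpoly n :=
  fun mu => (mu == monom a S)%:R.

Definition p_pol n m (L : {set 'I_n.-1}) : zpoly n :=
  fun mu => \sum_(S : {set 'I_n.-1} | (S \subset L) && (#|S| == m.-1)%N)
              mpoly 1 S mu.

Definition f_pol n m (L : {set 'I_n.-1}) : zpoly n :=
  fun mu => \sum_(S : {set 'I_n.-1} | (S \subset L) && (#|S| <= m - 2)%N)
              mpoly (#|L| - #|S| - 1) S mu.

Definition lincomb n D (xi : 'rV['F_2]_D) (P : 'I_D -> zpoly n) : zpoly n :=
  fun mu => \sum_(i < D) xi 0 i * P i mu.

Definition zpoly_is0 n (P : zpoly n) : Prop := forall mu, P mu = 0.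

Definition asbool (P : Prop) : bool :=
  if excluded_middle_informative P then true else false.

Definition Xspace n D (P : 'I_D -> zpoly n) : {vspace 'rV['F_2]_D} :=
  <<[seq xi <- enum 'rV['F_2]_D | asbool (zpoly_is0 (lincomb xi P))]>>%VS.

Definition alpha (m : nat) : nat :=
  (\sum_(i < m) 2 ^ (m.-1 - i) * 'C(i.*2, i))%N.

Definition beta (n m : nat) : nat := ('C(n.-1, m.+1) - alpha m)%N.

(* Main.v *)
Require Import Defs.
From HB Require Import structures.
From mathcomp Require Import all_boot all_order all_algebra.
From Stdlib Require Import ClassicalEpsilon.
From mathcomp Require Import all_field zify.
Import GRing.Theory.
Local Open Scope ring_scope.

Module CoreM.
Set Implicit Arguments. Unset Strict Implicit. Unset Printing Implicit Defensive.
Lemma F2c : (2%:R : 'F_2) = 0. Proof. exact: pchar_Fp_0. Qed.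
Lemma F2nat n : (n%:R : 'F_2) = (odd n)%:R.
Proof. by rewrite {1}(divn_eq n 2) modn2 natrD natrM F2c mulr0 add0r. Qed.
Lemma F2xx (x : 'F_2) : x + x = 0.
Proof. by apply: addrr_pchar2; exact: pchar_Fp. Qed.
Lemma F2even n : odd n = false -> (n%:R : 'F_2) = 0.
Proof. by move=> h; rewrite F2nat h. Qed.
Lemma F2odd n : odd n = true -> (n%:R : 'F_2) = 1.
Proof. by move=> h; rewrite F2nat h. Qed.

Section Core.
Variable U : finType.
Implicit Types (A B S L M : {set U}) (h : {set U} -> 'F_2).

Definition supp A t := [set L : {set U} | (L \subset A) && (#|L| == t)].
Definition W A t h S : 'F_2 :=
  \sum_(L : {set U} | L \subset A) (if (#|L| == t) && (S \subset L) then h L else 0).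

Lemma card_between S L r : S \subset L -> (#|S| <= r)%N ->
  #|[set M : {set U} | (S \subset M) && (M \subset L) && (#|M| == r)]| =
  'C(#|L| - #|S|, r - #|S|).
Proof.
move=> SL Sr.
have ->: (#|L| - #|S|)%N = #|L :\: S|.
  by rewrite cardsD (setIidPr SL).
rewrite -cards_draws.
have d B : B \subset L :\: S -> B = (S :|: B) :\: S.
  move=> hB; rewrite setDUl setDv set0U; apply/esym/setDidPl.
  by move: hB; rewrite subsetD => /andP[].
have inj : {in [set B : {set U} | B \subset L :\: S & #|B| == (r - #|S|)%N] &,
   injective (fun B => S :|: B)}.
  move=> B1 B2; rewrite !inE => /andP[h1 _] /andP[h2 _] e.
  by rewrite (d _ h1) (d _ h2) e.
rewrite -(card_in_imset inj).
apply: eq_card => M; rewrite inE; apply/idP/imsetP.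
  case/andP=> /andP[SM ML] /eqP cM; exists (M :\: S).
    rewrite inE setSD //= cardsD (setIidPr SM) cM eqxx.
    by [].
  by rewrite -{1}(setID M S) (setIidPr SM).
case=> B; rewrite inE => /andP[BLS /eqP cB] ->.
rewrite subsetUl /= subUset SL /=.
have BL : B \subset L by apply: subset_trans BLS (subsetDl _ _).
rewrite BL /= cardsU.
have -> : S :&: B = set0.
  apply/setP=> x; rewrite !inE; apply/negbTE; apply/negP=> /andP[xS xB].
  by move: (subsetP BLS x xB); rewrite inE xS.
by rewrite cards0 subn0 cB subnKC.
Qed.

Lemma W_ext B t h1 h2 S :
  (forall L, L \subset B -> #|L| = t -> S \subset L -> h1 L = h2 L) ->
  W B t h1 S = W B t h2 S.
Proof.
move=> e; apply: eq_bigr => L LB; case: ifP => // /andP[/eqP c SL].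
exact: e.
Qed.

Lemma W_add B t h1 h2 S :
  W B t (fun L => h1 L + h2 L) S = W B t h1 S + W B t h2 S.
Proof.
rewrite /W -big_split; apply: eq_bigr => L _; case: ifP => _ //.
by rewrite /= addr0.
Qed.

Lemma W_same B t h S : S \subset B -> #|S| = t -> W B t h S = h S.
Proof.
move=> SB cS; rewrite /W (bigD1 S) //= cS eqxx subxx /=.
rewrite big1 ?addr0 // => L /andP[LB LS]; case: ifP => // /andP[/eqP cL SL].
have : S == L by rewrite eqEcard SL cL cS leqnn.
by rewrite eq_sym (negPf LS).
Qed.

Lemma W_out B t h S x : x \in S -> x \notin B -> W B t h S = 0.
Proof.
move=> xS xB; apply: big1 => L LB; case: ifP => // /andP[_ SL].
by move: xB; rewrite (subsetP LB x (subsetP SL x xS)).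
Qed.

Lemma sum_if_card B (P : pred {set U}) (x : 'F_2) :
  \sum_(M : {set U} | M \subset B) (if P M then x else 0) =
  x *+ #|[set M : {set U} | (M \subset B) && P M]|.
Proof.
rewrite -big_mkcondr -sumr_const; apply: eq_bigl => M; by rewrite inE.
Qed.

Lemma WW B r t h S : (#|S| <= r)%N ->
  W B r (W B t h) S = ('C(t - #|S|, r - #|S|))%:R * W B t h S.
Proof.
move=> Sr; rewrite /W.
transitivity (\sum_(M : {set U} | M \subset B) \sum_(L : {set U} | L \subset B)
  (if ((#|M| == r) && (S \subset M)) && ((#|L| == t) && (M \subset L))
   then h L else 0)).
  apply: eq_bigr => M _; case: ifP => _ /=; first by [].
  by rewrite big1.
rewrite exchange_big mulr_sumr; apply: eq_bigr => L LB.
case: (boolP ((#|L| == t) && (S \subset L))) => [/andP[/eqP cL SL]|hL].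
  rewrite (eq_bigr (fun M => if (S \subset M) && (M \subset L) && (#|M| == r)
     then h L else 0)); last first.
    by move=> M _; rewrite cL eqxx /=; case: (#|M| == r); case: (S \subset M);
      case: (M \subset L).
  rewrite sum_if_card mulr_natl; congr (_ *+ _).
  rewrite -cL -card_between //; apply: eq_card => M; rewrite !inE.
  case: (boolP (M \subset L)) => ML; last by rewrite !andbF.
  by rewrite (subset_trans ML LB) andbT.
rewrite mulr0; apply: big1 => M _; case: ifP => // /andP[/andP[_ SM] /andP[cL ML]].
by move: hL; rewrite cL (subset_trans SM ML).
Qed.


Lemma sum_split1 B x (F : {set U} -> 'F_2) : x \in B ->
  \sum_(L : {set U} | L \subset B) F L =
  \sum_(L : {set U} | L \subset B :\ x) (F L + F (x |: L)).
Proof.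
move=> xB; rewrite big_split /= (bigID (fun L : {set U} => x \in L)) /= addrC.
congr (_ + _).
  by apply: eq_bigl => L; rewrite subsetD1.
rewrite (reindex_onto (fun L => x |: L) (fun L => L :\ x)) /=; last first.
  by move=> L /andP[_ xL]; exact: setD1K.
apply: eq_bigl => L; rewrite setU11 andbT subUset sub1set xB /= subsetD1.
case: (boolP (x \in L)) => xL; last by rewrite setU1K // eqxx andbT.
rewrite andbF; apply/negbTE; rewrite negb_and; apply/orP; right.
apply/eqP => e.
by move: (setD11 x (x |: L)); rewrite e xL.
Qed.


Lemma subU1 x S L : (S \subset x |: L) = (S :\ x \subset L).
Proof.
apply/subsetP/subsetP => H y; rewrite ?inE.
  by case/andP=> yx yS; move: (H y yS); rewrite !inE (negPf yx).
move=> yS; case: (eqVneq y x) => [_|yx] //=; apply: H.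
by rewrite !inE yx.
Qed.

Lemma W_split A a b t h S : a \in A -> b \in A -> a != b ->
  W A t.+2 h S =
  W (A :\ a :\ b) t.+2 h S
  + W (A :\ a :\ b) t.+1 (fun M => h (a |: M)) (S :\ a)
  + W (A :\ a :\ b) t.+1 (fun M => h (b |: M)) (S :\ b)
  + W (A :\ a :\ b) t (fun M => h (a |: (b |: M))) (S :\ a :\ b).
Proof.
move=> aA bA ab.
have bA' : b \in A :\ a by rewrite !inE eq_sym ab.
rewrite /W (sum_split1 _ aA) (sum_split1 _ bA') !big_split /= !addrA.
have nL L : L \subset A :\ a :\ b -> (a \notin L) /\ (b \notin L).
  move=> LA; split; apply/negP => xL; move: (subsetP LA _ xL); rewrite !inE.
    by rewrite eqxx andbF.
  by rewrite eqxx.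
congr (_ + _ + _ + _); apply: eq_bigr => L LA; have [aL bL] := nL L LA.
- rewrite cardsU1 aL /= eqSS subU1 //.
- rewrite cardsU1 bL /= eqSS subU1 //.
- have abL : a \notin b |: L by rewrite !inE negb_or ab aL.
  by rewrite cardsU1 cardsU1 bL abL /= !eqSS !subU1.
Qed.


Lemma setD1_id x S : x \notin S -> S :\ x = S.
Proof.
move=> xS; apply/setP => y; rewrite !inE; case: eqVneq => // ->.
by rewrite (negPf xS).
Qed.

Lemma W0 B t S : W B t (fun _ => 0) S = 0.
Proof. by apply: big1 => L _; case: ifP. Qed.

Lemma W_zero B t h S : (forall L, L \in supp B t -> h L = 0) -> W B t h S = 0.
Proof.
move=> H; rewrite -(W0 B t S); apply: W_ext => L LB cL _.
by apply: H; rewrite inE LB cL eqxx.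
Qed.

Section WWs.
Variables (B : {set U}) (h : {set U} -> 'F_2) (S : {set U}) (j : nat).
Hypothesis cS : #|S| = j.
Lemma WW21 : W B j.+1 (W B j.+2 h) S = 0.
Proof.
have e1 : (j.+2 - j = 2)%N by lia.
have e2 : (j.+1 - j = 1)%N by lia.
rewrite WW; last by rewrite cS; lia.
rewrite cS e1 e2.
by rewrite F2even // mul0r.
Qed.
Lemma WW31 : W B j.+1 (W B j.+3 h) S = W B j.+3 h S.
Proof.
have e1 : (j.+3 - j = 3)%N by lia.
have e2 : (j.+1 - j = 1)%N by lia.
rewrite WW; last by rewrite cS; lia.
rewrite cS e1 e2.
by rewrite F2odd // mul1r.
Qed.
Lemma WW32 : W B j.+2 (W B j.+3 h) S = W B j.+3 h S.
Proof.
have e1 : (j.+3 - j = 3)%N by lia.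
have e2 : (j.+2 - j = 2)%N by lia.
rewrite WW; last by rewrite cS; lia.
rewrite cS e1 e2.
by rewrite F2odd // mul1r.
Qed.
Lemma WW42 : W B j.+2 (W B j.+4 h) S = 0.
Proof.
have e1 : (j.+4 - j = 4)%N by lia.
have e2 : (j.+2 - j = 2)%N by lia.
rewrite WW; last by rewrite cS; lia.
rewrite cS e1 e2.
by rewrite F2even // mul0r.
Qed.
Lemma WW43 : W B j.+3 (W B j.+4 h) S = 0.
Proof.
have e1 : (j.+4 - j = 4)%N by lia.
have e2 : (j.+3 - j = 3)%N by lia.
rewrite WW; last by rewrite cS; lia.
rewrite cS e1 e2.
by rewrite F2even // mul0r.
Qed.
End WWs.

Definition Ker A k := [set g : {ffun {set U} -> 'F_2} |
  [forall L, (L \notin supp A k.+2) ==> (g L == 0)] &&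
  [forall S in supp A k, W A k.+2 g S == 0]].

Definition Free B t := [set g : {ffun {set U} -> 'F_2} |
  [forall L, (L \notin supp B t) ==> (g L == 0)]].

Lemma card_supp B t : #|supp B t| = 'C(#|B|, t).
Proof. by rewrite -cards_draws; apply: eq_card => L; rewrite !inE. Qed.

Lemma card_Free B t : #|Free B t| = (2 ^ 'C(#|B|, t))%N.
Proof.
transitivity (#|pffun_on (0:'F_2) (supp B t) predT|); last first.
  by rewrite card_pffun_on card_supp (card_Fp (isT : prime 2)).
apply: eq_card => g; rewrite inE; apply/forallP/pffun_onP => [H|[H _] L].
  split=> [|y _]; last by [].
  apply/subsetP => L; rewrite supportE; apply: contraR => LS.
  by move: (H L); rewrite LS /= => /eqP ->; rewrite eqxx.
apply/implyP => LS; apply/negPn/negP => gL.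
by move: LS; rewrite (subsetP H L gL).
Qed.


Lemma F2rot (x y z : 'F_2) : x + y + z + (y + z + x) = 0.
Proof. have -> : y + z + x = x + y + z by rewrite addrC addrA. exact: F2xx. Qed.

Lemma F2eq (x y : 'F_2) : x + y = 0 -> x = y.
Proof. by move=> h; rewrite -[x]addr0 -(F2xx y) addrA h add0r. Qed.

Lemma KerS B k (g : {ffun {set U} -> 'F_2}) L :
  g \in Ker B k -> L \notin supp B k.+2 -> g L = 0.
Proof.
by rewrite inE => /andP[/forallP H _] LS; move/implyP: (H L) => /(_ LS) /eqP.
Qed.

Lemma KerC B k (g : {ffun {set U} -> 'F_2}) S :
  g \in Ker B k -> S \in supp B k -> W B k.+2 g S = 0.
Proof.
by rewrite inE => /andP[_ /forallP H] SS; move/implyP: (H S) => /(_ SS) /eqP.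
Qed.

Lemma FreeS B t (g : {ffun {set U} -> 'F_2}) L :
  g \in Free B t -> L \notin supp B t -> g L = 0.
Proof.
by rewrite inE => /forallP H LS; move/implyP: (H L) => /(_ LS) /eqP.
Qed.

Lemma Kdeep B i (g : {ffun {set U} -> 'F_2}) S :
  g \in Ker B i.+1 -> #|S| = i -> W B i.+3 g S = 0.
Proof.
move=> gK cS; rewrite -(WW31 _ _ cS); apply: W_zero => M MS.
exact: KerC gK MS.
Qed.

Section Rec.
Variables (A : {set U}) (a b : U) (j : nat).
Hypotheses (aA : a \in A) (bA : b \in A) (ab : a != b).
Local Notation A' := (A :\ a :\ b).

Lemma subA' L : (L \subset A') = [&& L \subset A, a \notin L & b \notin L].
Proof. by rewrite !subsetD1 andbA. Qed.

Lemma aA' : a \notin A'.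
Proof. by rewrite !inE eqxx /= andbF. Qed.
Lemma bA' : b \notin A'.
Proof. by rewrite !inE eqxx. Qed.

Lemma in_suppA L t : L \subset A' -> (L \in supp A t) = (#|L| == t).
Proof. by rewrite subA' inE => /and3P[-> _ _]. Qed.
Lemma in_suppA' L t : L \subset A' -> (L \in supp A' t) = (#|L| == t).
Proof. by rewrite inE => ->. Qed.

Lemma a_notin_b L : L \subset A' -> a \notin b |: L.
Proof. by rewrite subA' !inE negb_or ab => /and3P[_ -> _]. Qed.
Lemma b_notin_a L : L \subset A' -> b \notin a |: L.
Proof. by rewrite subA' !inE negb_or eq_sym ab => /and3P[_ _ ->]. Qed.

Lemma in_suppA_a L t : L \subset A' -> (a |: L \in supp A t.+1) = (#|L| == t).
Proof.
move=> LA; have := LA; rewrite subA' => /and3P[LA0 aL bL].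
by rewrite inE subUset sub1set aA LA0 cardsU1 aL eqSS.
Qed.
Lemma in_suppA_b L t : L \subset A' -> (b |: L \in supp A t.+1) = (#|L| == t).
Proof.
move=> LA; have := LA; rewrite subA' => /and3P[LA0 aL bL].
by rewrite inE subUset sub1set bA LA0 cardsU1 bL eqSS.
Qed.
Lemma in_suppA_ab L t : L \subset A' ->
  (a |: (b |: L) \in supp A t.+2) = (#|L| == t).
Proof.
move=> LA; have := LA; rewrite subA' => /and3P[LA0 aL bL].
rewrite inE !subUset !sub1set aA bA LA0 cardsU1 cardsU1 bL (a_notin_b LA).
by rewrite /= !eqSS.
Qed.

Definition Tgt := setX (setX (Ker A' j) (Ker A' j)) (Free A' j.+3).

Definition phiA (x : {ffun {set U} -> 'F_2}) : {ffun {set U} -> 'F_2} :=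
  [ffun M => if M \in supp A' j.+2 then x (a |: M) + W A' j.+3 x M else 0].
Definition phiB (x : {ffun {set U} -> 'F_2}) : {ffun {set U} -> 'F_2} :=
  [ffun M => if M \in supp A' j.+2 then x (b |: M) + W A' j.+3 x M else 0].
Definition phi0 (x : {ffun {set U} -> 'F_2}) : {ffun {set U} -> 'F_2} :=
  [ffun M => if M \in supp A' j.+3 then x M else 0].
Definition Phi x := ((phiA x, phiB x), phi0 x).

Definition XA (p : {ffun {set U} -> 'F_2} * {ffun {set U} -> 'F_2} *
   {ffun {set U} -> 'F_2}) M := p.1.1 M + W A' j.+3 p.2 M.
Definition XB (p : {ffun {set U} -> 'F_2} * {ffun {set U} -> 'F_2} *
   {ffun {set U} -> 'F_2}) M := p.1.2 M + W A' j.+3 p.2 M.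
Definition XAB p S := W A' j.+2 (XA p) S + W A' j.+2 (XB p) S + W A' j.+3 p.2 S.
Definition Psi p : {ffun {set U} -> 'F_2} :=
  [ffun L => if L \in supp A j.+3 then
     (if a \in L then (if b \in L then XAB p (L :\ a :\ b) else XA p (L :\ a))
      else if b \in L then XB p (L :\ b) else p.2 L) else 0].

Section KerFacts.
Variable x : {ffun {set U} -> 'F_2}.
Hypothesis xK : x \in Ker A j.+1.

Lemma Ksupp L : L \notin supp A j.+3 -> x L = 0.
Proof.
by move: xK; rewrite inE => /andP[/forallP H _] LS; move/implyP: (H L) => /(_ LS) /eqP.
Qed.

Lemma Kcond S : S \in supp A j.+1 -> W A j.+3 x S = 0.
Proof.
by move: xK; rewrite inE => /andP[_ /forallP H] SS; move/implyP: (H S) => /(_ SS) /eqP.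
Qed.

Lemma K0 (T : {set U}) : T \subset A' -> #|T| = j.+1 ->
  x (a |: (b |: T)) = W A' j.+2 (fun M => x (a |: M)) T
     + W A' j.+2 (fun M => x (b |: M)) T + W A' j.+3 x T.
Proof.
move=> TA cT; have := TA; rewrite subA' => /and3P[TA0 aT bT].
have := Kcond (S := T); rewrite in_suppA // cT eqxx => /(_ isT).
rewrite (W_split _ _ _ aA bA ab) (setD1_id aT) (setD1_id bT) (W_same _ TA cT) => h.
apply/esym/F2eq; rewrite -h; congr (_ + _).
by rewrite addrC addrA.
Qed.

Lemma Ka (S' : {set U}) : S' \subset A' -> #|S'| = j ->
  W A' j.+2 (fun M => x (a |: M)) S' = W A' j.+1 (fun M => x (a |: (b |: M))) S'.
Proof.
move=> SA cS; have := SA; rewrite subA' => /and3P[SA0 aS bS].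
have := Kcond (S := a |: S'); rewrite in_suppA_a // cS eqxx => /(_ isT).
rewrite (W_split _ _ _ aA bA ab) (setU1K aS) (setD1_id bS) (setD1_id (b_notin_a SA)).
rewrite !(W_out _ _ (setU11 a S') aA') add0r addr0.
exact: F2eq.
Qed.

Lemma Kb (S' : {set U}) : S' \subset A' -> #|S'| = j ->
  W A' j.+2 (fun M => x (b |: M)) S' = W A' j.+1 (fun M => x (a |: (b |: M))) S'.
Proof.
move=> SA cS; have := SA; rewrite subA' => /and3P[SA0 aS bS].
have := Kcond (S := b |: S'); rewrite in_suppA_b // cS eqxx => /(_ isT).
rewrite (W_split _ _ _ aA bA ab) (setD1_id (a_notin_b SA)) (setU1K bS).
rewrite !(W_out _ _ (setU11 b S') bA') !add0r.
exact: F2eq.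
Qed.

Lemma KW (S' : {set U}) : S' \subset A' -> #|S'| = j ->
  W A' j.+1 (fun M => x (a |: (b |: M))) S' = W A' j.+3 x S'.
Proof.
move=> SA cS.
rewrite (W_ext (h2 := fun T => W A' j.+2 (fun M => x (a |: M)) T
   + W A' j.+2 (fun M => x (b |: M)) T + W A' j.+3 x T)); last first.
  by move=> T TA cT _; exact: K0.
by rewrite !W_add (WW21 _ _ cS) (WW21 _ _ cS) (WW31 _ _ cS) !add0r.
Qed.

End KerFacts.

Lemma W_phi0 (y : {ffun {set U} -> 'F_2}) S :
  W A' j.+3 (phi0 y) S = W A' j.+3 y S.
Proof. by apply: W_ext => L LA cL _; rewrite ffunE in_suppA' // cL eqxx. Qed.

Section KerFacts2.
Variable x : {ffun {set U} -> 'F_2}.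
Hypothesis xK : x \in Ker A j.+1.

Lemma phiA_ker : phiA x \in Ker A' j.
Proof.
rewrite inE; apply/andP; split.
  by apply/forallP => M; apply/implyP => MS; rewrite ffunE (negPf MS).
apply/forallP => S'; apply/implyP; rewrite inE => /andP[SA /eqP cS].
rewrite (W_ext (h2 := fun M => x (a |: M) + W A' j.+3 x M)); last first.
  by move=> M MA cM _; rewrite ffunE in_suppA' // cM eqxx.
by rewrite W_add (WW32 _ _ cS) (Ka xK SA cS) (KW xK SA cS) F2xx.
Qed.

Lemma phiB_ker : phiB x \in Ker A' j.
Proof.
rewrite inE; apply/andP; split.
  by apply/forallP => M; apply/implyP => MS; rewrite ffunE (negPf MS).
apply/forallP => S'; apply/implyP; rewrite inE => /andP[SA /eqP cS].
rewrite (W_ext (h2 := fun M => x (b |: M) + W A' j.+3 x M)); last first.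
  by move=> M MA cM _; rewrite ffunE in_suppA' // cM eqxx.
by rewrite W_add (WW32 _ _ cS) (Kb xK SA cS) (KW xK SA cS) F2xx.
Qed.

Lemma phi0_free : phi0 x \in Free A' j.+3.
Proof.
by rewrite inE; apply/forallP => L; apply/implyP => LS; rewrite ffunE (negPf LS).
Qed.

Lemma Phi_tgt : Phi x \in Tgt.
Proof. by rewrite !in_setX /= phiA_ker phiB_ker phi0_free. Qed.

Lemma XA_Phi M : M \subset A' -> #|M| = j.+2 -> XA (Phi x) M = x (a |: M).
Proof.
by move=> MA cM; rewrite /XA /= ffunE in_suppA' // cM eqxx W_phi0 -addrA F2xx addr0.
Qed.
Lemma XB_Phi M : M \subset A' -> #|M| = j.+2 -> XB (Phi x) M = x (b |: M).
Proof.
by move=> MA cM; rewrite /XB /= ffunE in_suppA' // cM eqxx W_phi0 -addrA F2xx addr0.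
Qed.

Lemma PsiPhi : Psi (Phi x) = x.
Proof.
apply/ffunP => L; rewrite ffunE; case: ifP => LS; last by rewrite (Ksupp xK) // LS.
move: (LS); rewrite inE => /andP[LA /eqP cL].
have c1 y : y \in L -> #|L :\ y| = j.+2.
  by move=> yL; move: (cardsD1 y L); rewrite yL cL add1n => -[].
case: (boolP (a \in L)) => aL; case: (boolP (b \in L)) => bL.
- have bLa : b \in L :\ a by rewrite !inE eq_sym ab.
  set T := L :\ a :\ b.
  have TA : T \subset A' by rewrite /T; apply: setSD; apply: setSD.
  have cT : #|T| = j.+1.
    by move: (cardsD1 b (L :\ a)); rewrite bLa (c1 _ aL) add1n => -[].
  have -> : x L = x (a |: (b |: T)) by rewrite /T (setD1K bLa) (setD1K aL).
  rewrite (K0 xK TA cT) /XAB W_phi0; congr (_ + _ + _); apply: W_ext => M MA cM _.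
    exact: XA_Phi.
  exact: XB_Phi.
- have LaA : L :\ a \subset A'.
    by rewrite subA' !inE eqxx /= negb_and bL orbT andbT (subset_trans (subD1set _ _) LA).
  by rewrite XA_Phi ?c1 // setD1K.
- have LbA : L :\ b \subset A'.
    rewrite subA' !inE eqxx /= negb_and aL orbT /= (subset_trans (subD1set _ _) LA).
    by [].
  by rewrite XB_Phi ?c1 // setD1K.
- have LA' : L \subset A' by rewrite subA' LA aL bL.
  by rewrite /= ffunE in_suppA' // cL eqxx.
Qed.
End KerFacts2.

Section PsiFacts.
Variable p : {ffun {set U} -> 'F_2} * {ffun {set U} -> 'F_2} * {ffun {set U} -> 'F_2}.

Lemma Psi0 M : M \subset A' -> Psi p M = if #|M| == j.+3 then p.2 M else 0.
Proof.
move=> MA; have := MA; rewrite subA' => /and3P[_ aM bM].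
by rewrite ffunE in_suppA // (negPf aM) (negPf bM).
Qed.

Lemma PsiA M : M \subset A' -> Psi p (a |: M) = if #|M| == j.+2 then XA p M else 0.
Proof.
move=> MA; have := MA; rewrite subA' => /and3P[_ aM bM].
by rewrite ffunE in_suppA_a // setU11 (negPf (b_notin_a MA)) setU1K.
Qed.

Lemma PsiB M : M \subset A' -> Psi p (b |: M) = if #|M| == j.+2 then XB p M else 0.
Proof.
move=> MA; have := MA; rewrite subA' => /and3P[_ aM bM].
by rewrite ffunE in_suppA_b // (negPf (a_notin_b MA)) setU11 setU1K.
Qed.

Lemma PsiAB M : M \subset A' ->
  Psi p (a |: (b |: M)) = if #|M| == j.+1 then XAB p M else 0.
Proof.
move=> MA; have := MA; rewrite subA' => /and3P[_ aM bM].
have bin : b \in a |: (b |: M) by rewrite !inE eqxx orbT.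
by rewrite ffunE in_suppA_ab // setU11 bin setU1K ?(a_notin_b MA) // setU1K.
Qed.

Lemma E0 S : W A' j.+3 (Psi p) S = W A' j.+3 p.2 S.
Proof. by apply: W_ext => L LA cL _; rewrite Psi0 // cL eqxx. Qed.
Lemma Ea S : W A' j.+2 (fun M => Psi p (a |: M)) S = W A' j.+2 (XA p) S.
Proof. by apply: W_ext => L LA cL _; rewrite PsiA // cL eqxx. Qed.
Lemma Eb S : W A' j.+2 (fun M => Psi p (b |: M)) S = W A' j.+2 (XB p) S.
Proof. by apply: W_ext => L LA cL _; rewrite PsiB // cL eqxx. Qed.
Lemma Eab S : W A' j.+1 (fun M => Psi p (a |: (b |: M))) S = W A' j.+1 (XAB p) S.
Proof. by apply: W_ext => L LA cL _; rewrite PsiAB // cL eqxx. Qed.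

Lemma XA_W S' : #|S'| = j -> W A' j.+2 (XA p) S' = W A' j.+2 p.1.1 S' + W A' j.+3 p.2 S'.
Proof. by move=> cS; rewrite /XA W_add (WW32 _ _ cS). Qed.
Lemma XB_W S' : #|S'| = j -> W A' j.+2 (XB p) S' = W A' j.+2 p.1.2 S' + W A' j.+3 p.2 S'.
Proof. by move=> cS; rewrite /XB W_add (WW32 _ _ cS). Qed.
Lemma XAB_W S' : #|S'| = j -> W A' j.+1 (XAB p) S' = W A' j.+3 p.2 S'.
Proof.
by move=> cS; rewrite /XAB !W_add (WW21 _ _ cS) (WW21 _ _ cS) (WW31 _ _ cS) !add0r.
Qed.

Hypothesis pT : p \in Tgt.

Lemma haK : p.1.1 \in Ker A' j.
Proof. by move: pT; rewrite /Tgt !inE => /andP[/andP[]]. Qed.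
Lemma hbK : p.1.2 \in Ker A' j.
Proof. by move: pT; rewrite /Tgt !inE => /andP[/andP[]]. Qed.
Lemma gF : p.2 \in Free A' j.+3.
Proof. by move: pT; rewrite /Tgt !inE => /andP[]. Qed.

Lemma XAB_W2 i S : j = i.+1 -> #|S| = i -> W A' j.+1 (XAB p) S = 0.
Proof.
move=> ji cS; have hK := haK; have hbK' := hbK; rewrite ji in hK hbK'.
rewrite /XAB !W_add.
have e1 : W A' j.+1 (W A' j.+2 (XA p)) S = 0.
  by rewrite ji (WW32 _ _ cS) /XA W_add ji (WW43 _ _ cS) addr0 (Kdeep hK cS).
have e2 : W A' j.+1 (W A' j.+2 (XB p)) S = 0.
  by rewrite ji (WW32 _ _ cS) /XB W_add ji (WW43 _ _ cS) addr0 (Kdeep hbK' cS).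
have e3 : W A' j.+1 (W A' j.+3 p.2) S = 0.
  by rewrite ji (WW42 _ _ cS).
by rewrite e1 e2 e3 !addr0.
Qed.

Lemma Psi_ker : Psi p \in Ker A j.+1.
Proof.
rewrite inE; apply/andP; split.
  by apply/forallP => L; apply/implyP => LS; rewrite ffunE (negPf LS).
apply/forallP => S; apply/implyP; rewrite inE => /andP[SA /eqP cS].
apply/eqP; rewrite (W_split _ _ _ aA bA ab) E0 Ea Eb Eab.
have c1 y : y \in S -> #|S :\ y| = j.
  by move=> yS; move: (cardsD1 y S); rewrite yS cS add1n => -[].
case: (boolP (a \in S)) => aS; case: (boolP (b \in S)) => bS.
- have bSa : b \in S :\ a by rewrite !inE eq_sym ab.
  have aSb : a \in S :\ b by rewrite !inE ab.
  rewrite (W_out _ _ aS aA') (W_out _ _ bSa bA') (W_out _ _ aSb aA') !add0r.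
  have cS2 : #|S :\ a :\ b| = j.-1.
    by move: (cardsD1 b (S :\ a)); rewrite bSa (c1 _ aS) add1n => ->.
  have jpos : (0 < j)%N.
    by move: (cardsD1 b (S :\ a)); rewrite bSa (c1 _ aS) add1n => ->.
  by apply: (XAB_W2 (i := j.-1)); [rewrite prednK | ].
- have Sa : S :\ a \subset A'.
    by rewrite subA' !inE eqxx /= negb_and bS orbT andbT (subset_trans (subD1set _ _) SA).
  have Sa' : S :\ a \in supp A' j by rewrite inE Sa (c1 _ aS) eqxx.
  rewrite (setD1_id bS) (setD1_id (S := S :\ a) (x := b)); last by rewrite !inE (negPf bS) andbF.
  rewrite (W_out _ _ aS aA') (W_out _ _ aS aA') add0r addr0.
  rewrite (XA_W (c1 _ aS)) (XAB_W (c1 _ aS)) (KerC haK Sa') add0r.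
  exact: F2xx.
- have Sb : S :\ b \subset A'.
    rewrite subA' !inE eqxx /= negb_and aS orbT /= (subset_trans (subD1set _ _) SA).
    by [].
  have Sb' : S :\ b \in supp A' j by rewrite inE Sb (c1 _ bS) eqxx.
  rewrite (setD1_id aS).
  rewrite (W_out _ _ bS bA') (W_out _ _ bS bA') !add0r.
  rewrite (XB_W (c1 _ bS)) (XAB_W (c1 _ bS)) (KerC hbK Sb') add0r.
  exact: F2xx.
- have SA' : S \subset A' by rewrite subA' SA aS bS.
  rewrite (setD1_id aS) (setD1_id bS) (W_same _ SA' cS) /XAB.
  exact: F2rot.
Qed.

Lemma PhiPsi : Phi (Psi p) = p.
Proof.
transitivity ((p.1.1, p.1.2), p.2); last by case: (p) => [[]].
have hK := haK; have hbK' := hbK; have gF' := gF.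
rewrite /Phi; congr (_, _); first congr (_, _).
- apply/ffunP => M; rewrite ffunE; case: ifP => MS; last by rewrite (KerS hK) // MS.
  move: (MS); rewrite inE => /andP[MA /eqP cM].
  by rewrite PsiA // cM eqxx /XA /= E0 -addrA F2xx addr0.
- apply/ffunP => M; rewrite ffunE; case: ifP => MS; last by rewrite (KerS hbK') // MS.
  move: (MS); rewrite inE => /andP[MA /eqP cM].
  by rewrite PsiB // cM eqxx /XB /= E0 -addrA F2xx addr0.
- apply/ffunP => L; rewrite ffunE; case: ifP => LS; last by rewrite (FreeS gF') // LS.
  move: (LS); rewrite inE => /andP[LA /eqP cL].
  by rewrite Psi0 // cL eqxx.
Qed.
End PsiFacts.

Lemma card_Ker_rec :
  #|Ker A j.+1| = (#|Ker A' j| * #|Ker A' j| * 2 ^ 'C(#|A'|, j.+3))%N.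
Proof.
have inj : {in Ker A j.+1 &, injective Phi}.
  by move=> x y xK yK e; rewrite -(PsiPhi xK) -(PsiPhi yK) e.
rewrite -(card_in_imset inj).
have -> : Phi @: Ker A j.+1 = Tgt.
  apply/setP => p; apply/imsetP/idP => [[x xK ->]|pT]; first exact: Phi_tgt.
  by exists (Psi p); [exact: Psi_ker | rewrite PhiPsi].
by rewrite !cardsX card_Free.
Qed.

End Rec.
Lemma W_full B t h S : S \subset B -> #|B| = t -> W B t h S = h B.
Proof.
move=> SB cB; rewrite /W (bigD1 B) //= cB eqxx SB /=.
rewrite big1 ?addr0 // => L /andP[LB LS]; case: ifP => // /andP[/eqP cL SL].
have : L == B by rewrite eqEcard LB cL cB leqnn.
by rewrite (negPf LS).
Qed.

Fixpoint Kn k := if k is j.+1 then ((Kn j).*2 + 'C(j.*2.+2, j.+3))%N else 0%N.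

Theorem card_Ker k A : #|A| = k.*2.+2 -> #|Ker A k| = (2 ^ Kn k)%N.
Proof.
elim: k A => [|j IH] A cA.
  rewrite /= (@eq_card1 _ [ffun _ => 0]) // => g; apply/idP/eqP => [gK|->].
    apply/ffunP => L; rewrite ffunE.
    case: (boolP (L \in supp A 2)) => LS; last exact: (KerS gK).
    have -> : L = A.
      by move: LS; rewrite inE => /andP[LA /eqP cL]; apply/eqP; rewrite eqEcard LA cL cA.
    have := KerC gK (S := set0); rewrite inE sub0set cards0 => /(_ isT).
    by rewrite W_full ?sub0set.
  rewrite inE; apply/andP; split; apply/forallP => L; apply/implyP => _.
    by rewrite ffunE.
  by apply/eqP; apply: W_zero => M _; rewrite ffunE.
have : (0 < #|A|)%N by rewrite cA.
case/card_gt0P => a aA.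
have : (0 < #|A :\ a|)%N by move: (cardsD1 a A); rewrite aA cA add1n => -[] <-.
case/card_gt0P => b; rewrite !inE => /andP[ba bA].
rewrite (card_Ker_rec j aA bA); last by rewrite eq_sym.
have cA' : #|A :\ a :\ b| = j.*2.+2.
  move: (cardsD1 a A) (cardsD1 b (A :\ a)); rewrite aA cA !inE ba bA /=.
  rewrite doubleS; lia.
by rewrite IH // /= cA' -expnD -expnD addnn.
Qed.

End Core.

End CoreM.
Import CoreM.
Unset Implicit Arguments. Set Strict Implicit. Set Printing Implicit Defensive.

Lemma alphaS m : (alpha m.+1 = (alpha m).*2 + 'C(m.*2, m))%N.
Proof.
rewrite /alpha big_ord_recr /= subnn expn0 mul1n; congr (_ + _)%N.
rewrite -mul2n big_distrr /=; apply: eq_bigr => i _.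
rewrite mulnA -expnS; congr (2 ^ _ * _)%N.
have := ltn_ord i; lia.
Qed.

Lemma Kn_alpha k : (Kn k + alpha k.+1 = 'C(k.*2.+2, k.+2))%N.
Proof.
elim: k => [|k IH]; first by rewrite /alpha big_ord1.
rewrite /= alphaS.
have e1 := binS (k.*2.+3) (k.+2).
have e2 := binS (k.*2.+2) (k.+1).
have e3 := binS (k.*2.+2) (k.+2).
rewrite doubleS; move: IH e1 e2 e3; rewrite -!addnn; lia.
Qed.

Lemma asboolP (P : Prop) : asbool P = true <-> P.
Proof. by rewrite /asbool; case: excluded_middle_informative. Qed.

Lemma lincomb_sum n D K (c : 'I_K -> 'F_2) (v : 'I_K -> 'rV['F_2]_D)
  (P : 'I_D -> zpoly n) mu :
  lincomb (\sum_(k < K) c k *: v k) P mu = \sum_(k < K) c k * lincomb (v k) P mu.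
Proof.
rewrite /lincomb.
transitivity (\sum_(i < D) \sum_(k < K) c k * (v k 0 i * P i mu)).
  apply: eq_bigr => i _; rewrite summxE mulr_suml; apply: eq_bigr => k _.
  by rewrite mxE mulrA.
by rewrite exchange_big; apply: eq_bigr => k _; rewrite mulr_sumr.
Qed.

Lemma memX n D (P : 'I_D -> zpoly n) xi :
  (xi \in Xspace P) <-> zpoly_is0 (lincomb xi P).
Proof.
rewrite /Xspace; set s := [seq _ <- _ | _]; split.
  move=> H; have := coord_span (X := in_tuple s) H => -> mu.
  rewrite lincomb_sum big1 // => i _.
  have : s`_i \in s by apply: mem_nth; exact: (ltn_ord i).
  rewrite mem_filter => /andP[/asboolP h _].
  by rewrite h mulr0.
move=> h; apply: memv_span; rewrite mem_filter mem_enum andbT.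
exact/asboolP.
Qed.

Lemma monom_eq n a a' S S' :
  (@monom n a S == @monom n a' S') = (a == a') && (S == S').
Proof.
rewrite /monom xpair_eqE; congr (_ && _); apply/eqP/eqP => [/ffunP h|->//].
apply/setP => j; move: (h j); rewrite !ffunE.
by case: (j \in S); case: (j \in S').
Qed.

Lemma sum_eq1 (T : finType) (P : pred T) y :
  \sum_(x | P x) ((x == y)%:R : 'F_2) = (P y)%:R.
Proof.
rewrite big_mkcond (bigD1 y) //= eqxx big1 ?addr0.
  by case: (P y).
by move=> x /negPf ->; case: (P x).
Qed.

Lemma p_coef n m (L : {set 'I_n.-1}) (S : {set 'I_n.-1}) :
  p_pol m L (@monom n 1 S) = ((S \subset L) && (#|S| == m.-1))%:R.
Proof.
rewrite /p_pol /mpoly -(sum_eq1 _ (fun S' : {set 'I_n.-1} => (S' \subset L) && (#|S'| == m.-1))).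
by apply: eq_bigr => S' _; rewrite monom_eq eqxx eq_sym.
Qed.

Lemma f_coef n k (L : {set 'I_n.-1}) (S : {set 'I_n.-1}) : #|L| = k.+2 ->
  f_pol k.+1 L (@monom n (k.+1 - #|S|) S) = ((S \subset L) && (#|S| <= k.-1)%N)%:R.
Proof.
move=> cL; rewrite /f_pol /mpoly.
rewrite (_ : (k.+1 - 2 = k.-1)%N); last lia.
rewrite -(sum_eq1 _ (fun S' : {set 'I_n.-1} => (S' \subset L) && (#|S'| <= k.-1)%N)).
apply: eq_bigr => S' _; rewrite monom_eq cL.
case: (eqVneq S S') => [<-|ne]; last by rewrite andbF.
by rewrite andbT (_ : (k.+2 - #|S| - 1 = k.+1 - #|S|)%N) ?eqxx //; lia.
Qed.

Section Main.
Variables (n k : nat) (L : 'I_('C(n.-1, k.+2)) -> {set 'I_n.-1}).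
Hypotheses (hn : n = k.+1.*2.+1) (Linj : injective L) (Lc : forall i, #|L i| = k.+2).
Local Notation D := 'C(n.-1, k.+2).
Local Notation T := 'I_n.-1.

Lemma cT : #|[set: T]| = k.*2.+2.
Proof. by rewrite cardsT card_ord hn /= doubleS. Qed.

Definition Q (xi : 'rV['F_2]_D) (S : {set T}) := \sum_(i | S \subset L i) xi 0 i.

Lemma lincomb_p xi (S : {set T}) :
  lincomb xi (fun i => p_pol k.+1 (L i)) (@monom n 1 S) =
  if #|S| == k then Q xi S else 0.
Proof.
rewrite /lincomb.
transitivity (\sum_(i < D) xi 0 i * ((S \subset L i) && (#|S| == k))%:R).
  by apply: eq_bigr => i _; rewrite p_coef.
case: ifP => cS.
  rewrite /Q [RHS]big_mkcond; apply: eq_bigr => i _; rewrite andbT.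
  by case: (S \subset L i); rewrite ?mulr1 ?mulr0.
by apply: big1 => i _; rewrite andbF mulr0.
Qed.

Lemma zpoly_p xi : zpoly_is0 (lincomb xi (fun i => p_pol k.+1 (L i))) <->
  (forall S : {set T}, #|S| = k -> Q xi S = 0).
Proof.
split.
  by move=> h S cS; have := h (@monom n 1 S); rewrite lincomb_p cS eqxx.
move=> h mu; rewrite /lincomb /p_pol /mpoly.
transitivity (\sum_(i < D) \sum_(S : {set T}) (if (S \subset L i) && (#|S| == k)
   then xi 0 i * (mu == @monom n 1 S)%:R else 0)).
  apply: eq_bigr => i _; rewrite mulr_sumr big_mkcond; apply: eq_bigr => S _.
  by case: ifP.
rewrite exchange_big; apply: big1 => S _; case: (boolP (#|S| == k)) => cS.
  transitivity ((mu == @monom n 1 S)%:R * Q xi S).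
    rewrite /Q mulr_sumr [RHS]big_mkcond; apply: eq_bigr => i _; rewrite andbT.
    by case: ifP => _; rewrite ?mulr0 // mulrC.
  by rewrite h ?mulr0 //; apply/eqP.
by apply: big1 => i _; rewrite andbF.
Qed.

Lemma lincomb_f xi (S : {set T}) :
  lincomb xi (fun i => f_pol k.+1 (L i)) (@monom n (k.+1 - #|S|) S) =
  if (#|S| <= k.-1)%N then Q xi S else 0.
Proof.
rewrite /lincomb.
transitivity (\sum_(i < D) xi 0 i * ((S \subset L i) && (#|S| <= k.-1)%N)%:R).
  by apply: eq_bigr => i _; rewrite f_coef.
case: ifP => cS.
  rewrite /Q [RHS]big_mkcond; apply: eq_bigr => i _; rewrite andbT.
  by case: (S \subset L i); rewrite ?mulr1 ?mulr0.
by apply: big1 => i _; rewrite andbF mulr0.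
Qed.

Definition G (xi : 'rV['F_2]_D) : {ffun {set T} -> 'F_2} :=
  [ffun S => \sum_(i | L i == S) xi 0 i].

Lemma G_L xi i : G xi (L i) = xi 0 i.
Proof.
rewrite ffunE (eq_bigl (pred1 i)) ?big_pred1_eq // => j.
by rewrite /= (inj_eq Linj).
Qed.

Lemma G_inj : injective G.
Proof. by move=> x y e; apply/rowP => i; rewrite -!G_L e. Qed.

Lemma W_G xi (S : {set T}) : W [set: T] k.+2 (G xi) S = Q xi S.
Proof.
rewrite /W (eq_bigl (fun _ => true)); last by move=> L'; exact: subsetT.
transitivity (\sum_(L' : {set T}) \sum_(i < D)
   (if (L i == L') && (S \subset L i) then xi 0 i else 0)).
  apply: eq_bigr => L' _; rewrite ffunE; case: ifP => [/andP[_ SL]|c].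
    rewrite big_mkcond; apply: eq_bigr => i _.
    by case: eqP => [->|] //=; rewrite SL.
  apply/esym/big1 => i _; case: eqP => [e|] //=; move: c; rewrite -e Lc eqxx /=.
  by move=> ->.
rewrite exchange_big /Q [RHS]big_mkcond; apply: eq_bigr => i _.
rewrite (bigD1 (L i)) //= eqxx big1 ?addr0 // => L' ne.
by rewrite eq_sym (negPf ne).
Qed.

Lemma range (S : {set T}) : #|S| = k.+2 -> exists i, L i = S.
Proof.
move=> cS.
have sub : L @: [set: 'I_D] \subset [set S : {set T} | #|S| == k.+2].
  by apply/subsetP => _ /imsetP[i _ ->]; rewrite inE Lc.
have ce : #|L @: [set: 'I_D]| = #|[set S : {set T} | #|S| == k.+2]|.
  by rewrite card_imset // cardsT card_ord card_draws card_ord.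
have := subset_cardP ce sub => /(_ S); rewrite inE cS eqxx => /imsetP[i _ ->].
by exists i.
Qed.

Lemma G_row h : h \in Ker [set: T] k -> G (\row_i h (L i)) = h.
Proof.
move=> hK; apply/ffunP => S; rewrite ffunE.
case: (boolP (S \in supp [set: T] k.+2)) => SS.
  move: (SS); rewrite inE => /andP[_ /eqP cS]; have [i0 e] := range _ cS.
  rewrite (eq_bigl (pred1 i0)) ?big_pred1_eq ?mxE ?e // => j.
  by rewrite /= -e (inj_eq Linj).
rewrite (KerS hK SS); apply: big1 => i /eqP e; move: SS.
by rewrite -e inE subsetT Lc eqxx.
Qed.

Lemma card_X : #|Xspace (fun i => p_pol k.+1 (L i))| = #|Ker [set: T] k|.
Proof.
pose Qc xi := [forall S : {set T}, (#|S| == k) ==> (Q xi S == 0)].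
transitivity #|[set xi | Qc xi]|.
  apply: eq_card => xi; rewrite inE; apply/idP/idP.
    move/memX/zpoly_p => h; apply/forallP => S; apply/implyP => /eqP cS.
    by rewrite h.
  move=> /forallP h; apply/memX/zpoly_p => S cS.
  by move/implyP: (h S); rewrite cS eqxx => /(_ isT) /eqP.
rewrite -(card_imset _ G_inj); apply: eq_card => h.
apply/imsetP/idP => [[xi]|hK].
  rewrite inE => /forallP xiQ ->; rewrite inE; apply/andP; split.
    apply/forallP => S; apply/implyP => SS; rewrite ffunE; apply/eqP.
    apply: big1 => i /eqP e; move: SS; by rewrite -e inE subsetT Lc eqxx.
  apply/forallP => S; apply/implyP; rewrite inE => /andP[_ cS].
  by rewrite W_G; move/implyP: (xiQ S); apply.
exists (\row_i h (L i)); last by rewrite G_row.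
rewrite inE; apply/forallP => S; apply/implyP => cS.
by rewrite -W_G G_row // (KerC hK) // inE subsetT.
Qed.

Lemma cnt (C A : {set T}) :
  #|[set S : {set T} | (S \subset C) && (S \subset A)]| = (2 ^ #|C :&: A|)%N.
Proof.
rewrite -card_powerset; apply: eq_card => S; by rewrite powersetE inE subsetI.
Qed.

Lemma key xi : zpoly_is0 (lincomb xi (fun i => p_pol k.+1 (L i))) ->
  zpoly_is0 (lincomb xi (fun i => f_pol k.+1 (L i))) -> xi = 0.
Proof.
move=> hp hf.
have hQ : forall S : {set T}, (#|S| <= k)%N -> Q xi S = 0.
  move=> S cS; case: (eqVneq #|S| k) => [e|ne].
    exact: (proj1 (zpoly_p xi) hp S e).
  have := hf (@monom n (k.+1 - #|S|) S); rewrite lincomb_f.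
  rewrite (_ : (#|S| <= k.-1)%N = true) //.
  move/eqP: ne => ne; apply/idP; lia.
apply/rowP => i0; rewrite mxE.
set C := ~: L i0.
have cC : #|C| = k.
  have e : n.-1 = k.*2.+2 by rewrite hn /= doubleS.
  have := cardsC (L i0); rewrite Lc card_ord -/C; lia.
have H0 : \sum_(S : {set T} | S \subset C) Q xi S = 0.
  by apply: big1 => S SC; apply: hQ; rewrite -cC; exact: subset_leq_card.
rewrite -H0 /Q.
transitivity (\sum_(S : {set T} | S \subset C) \sum_(i < D)
   (if S \subset L i then xi 0 i else 0)); last first.
  by apply: eq_bigr => S _; rewrite [RHS]big_mkcond.
rewrite exchange_big /=.
under eq_bigr do rewrite sum_if_card cnt -mulr_natr F2nat oddX /= orbF.
rewrite (bigD1 i0) //= big1 ?addr0.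
  have -> : C :&: L i0 = set0 by rewrite /C setIC setICr.
  by rewrite cards0 mulr1.
move=> i ne; have -> : (#|C :&: L i| == 0%N) = false.
  rewrite cards_eq0 setI_eq0 disjoint_sym disjoints_subset /C setCK.
  apply/negbTE; apply: contra ne => sub.
  have : L i == L i0 by rewrite eqEcard sub !Lc leqnn.
  by rewrite (inj_eq Linj).
by rewrite mulr0.
Qed.

End Main.

Lemma card_vs2 D (V : {vspace 'rV['F_2]_D}) : #|V| = (2 ^ \dim V)%N.
Proof. by rewrite card_vspace card_Fp. Qed.

Theorem lemma7 (n m : nat) (L : 'I_('C(n.-1, m.+1)) -> {set 'I_n.-1}) :
  n = m.*2.+1 -> (5 <= n)%N ->
  injective L -> (forall i, #|L i| = m.+1) ->
  \dim (Xspace (fun i => p_pol m (L i))) = beta n m /\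
  (forall Om : seq 'rV['F_2]_('C(n.-1, m.+1)),
     basis_of (Xspace (fun i => p_pol m (L i))) Om ->
     forall c : 'I_(size Om) -> 'F_2,
       zpoly_is0 (fun mu => \sum_(k < size Om)
                    c k * lincomb (nth 0 Om k) (fun i => f_pol m (L i)) mu) ->
       forall k, c k = 0).
Proof.
case: m L => [|k] L hn h5 Linj Lc; first by exfalso; move: h5; rewrite hn.
split.
  have eb : beta n k.+1 = Kn k.
    by rewrite /beta hn /= doubleS -Kn_alpha addnK.
  apply: (@expnI 2 (isT : (1 < 2)%N)); rewrite -card_vs2 eb.
  rewrite (card_X _ _ _ Linj Lc) card_Ker //; exact: (cT _ _ hn).
move=> Om hb c hz k0.
case/andP: hb => /eqP eX freeOm.
pose xi := \sum_(i < size Om) c i *: nth 0 Om i.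
have xiX : xi \in Xspace (fun i => p_pol k.+1 (L i)).
  apply: memv_suml => i _; apply: memvZ; rewrite -eX; apply: memv_span.
  exact: mem_nth.
have hp := proj1 (memX _ _ _ xi) xiX.
have hf : zpoly_is0 (lincomb xi (fun i => f_pol k.+1 (L i))).
  by move=> mu; rewrite lincomb_sum; exact: hz.
have x0 := key _ _ _ hn Linj Lc _ hp hf.
have /freeP Hf : free (in_tuple Om) by [].
exact: Hf c x0 k0.
Qed.
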